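(* Let $G$ be a locally compact second countable group with two essentially chief series $(A_i)_{i=0}^m$ and $(B_j)_{j=0}^n$. Let $I=\{i\in\{1,\dots,m\}\mid A_i/A_{i-1}$ is a non-negligible chief factor of $G\}$ and $J=\{j\in\{1,\dots,n\}\mid B_j/B_{j-1}$ is a non-negligible chief factor of $G\}$. Then there is a bijection $f:I\to J$, where $f(i)$ is the unique element $j\in J$ such that $A_i/A_{i-1}$ is associated to $B_j/B_{j-1}$.
   Context: A normal factor of $G$ is $K/L$ with $L<K$ closed normal subgroups of $G$; it is a chief factor if no closed normal subgroup of $G$ lies strictly between $L$ and $K$. An essentially chief series for $G$ is a finite series $\{1\}=G_0\le\dots\le G_n=G$ of closed normal subgroups with each $G_{i+1}/G_i$ compact, discrete, or a chief factor of $G$. Normal factors $K_1/L_1$ and $K_2/L_2$ are associated if $\overline{K_1L_2}=\overline{K_2L_1}$ and $K_i\cap\overline{L_1L_2}=L_i$ for $i=1,2$. A chief factor $K/L$ is negligible if it is abelian or associated to a compact or discrete chief factor of $G$. *)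

(* Defs.v *)
From Stdlib Require Import List Arith.

Set Implicit Arguments.

Record TopGroup := {
  carrier :> Type;
  gmul : carrier -> carrier -> carrier;
  ginv : carrier -> carrier;
  gone : carrier;
  gmulA : forall x y z, gmul x (gmul y z) = gmul (gmul x y) z;
  gmul1 : forall x, gmul gone x = x;
  gmulV : forall x, gmul (ginv x) x = gone;
  is_open : (carrier -> Prop) -> Prop;
  open_full : is_open (fun _ => True);
  open_inter : forall U V, is_open U -> is_open V -> is_open (fun x => U x /\ V x);
  open_union : forall F : (carrier -> Prop) -> Prop,
      (forall U, F U -> is_open U) -> is_open (fun x => exists U, F U /\ U x);
  mul_cont : forall U x y, is_open U -> U (gmul x y) ->
      exists V W, is_open V /\ is_open W /\ V x /\ W y /\
        (forall a b, V a -> W b -> U (gmul a b));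
  inv_cont : forall U, is_open U -> is_open (fun x => U (ginv x))
}.

Section Defs.
Variable G : TopGroup.

Definition gset := G -> Prop.

Definition subset (A B : gset) : Prop := forall x, A x -> B x.
Definition seteq (A B : gset) : Prop := forall x, A x <-> B x.
Definition setI (A B : gset) : gset := fun x => A x /\ B x.
Definition setmul (A B : gset) : gset :=
  fun x => exists a b, A a /\ B b /\ x = gmul G a b.
Definition trivial_set : gset := fun x => x = gone G.
Definition full_set : gset := fun _ => True.

Definition closed (A : gset) : Prop := is_open G (fun x => ~ A x).
Definition closure (A : gset) : gset :=
  fun x => forall C, closed C -> subset A C -> C x.

Definition compact (A : gset) : Prop :=
  forall F : gset -> Prop, (forall U, F U -> is_open G U) ->
    (forall x, A x -> exists U, F U /\ U x) ->
    exists l : list gset, (forall U, In U l -> F U) /\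
      (forall x, A x -> exists U, In U l /\ U x).

Definition hausdorff : Prop :=
  forall x y, x <> y -> exists U V, is_open G U /\ is_open G V /\ U x /\ V y /\
    (forall z, ~ (U z /\ V z)).

Definition locally_compact : Prop :=
  forall x, exists U C, is_open G U /\ U x /\ subset U C /\ compact C.

Definition second_countable : Prop :=
  exists b : nat -> gset, (forall n, is_open G (b n)) /\
    (forall U x, is_open G U -> U x -> exists n, b n x /\ subset (b n) U).

(** locally compact second countable group (Hausdorff, by convention) *)
Definition lcsc : Prop := hausdorff /\ locally_compact /\ second_countable.

Definition subgroup (H : gset) : Prop :=
  H (gone G) /\ (forall x y, H x -> H y -> H (gmul G x y)) /\
  (forall x, H x -> H (ginv G x)).

Definition normal (H : gset) : Prop :=
  subgroup H /\ forall g h, H h -> H (gmul G (ginv G g) (gmul G h g)).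

Definition closed_normal (H : gset) : Prop := normal H /\ closed H.

Definition normal_factor (K L : gset) : Prop :=
  closed_normal K /\ closed_normal L /\ subset L K /\ ~ subset K L.

(** K/L is compact in the quotient topology (for L <= K).  Open sets of K/L
    are images of sets U /\ K with U open in G; this unfolds to: *)
Definition factor_compact (K L : gset) : Prop :=
  forall F : gset -> Prop, (forall U, F U -> is_open G U) ->
    (forall x, K x -> exists U, F U /\ U x) ->
    exists l : list gset, (forall U, In U l -> F U) /\
      (forall x, K x -> exists U, In U l /\ setmul U L x).

(** K/L is discrete: L is open in K (relative topology). *)
Definition factor_discrete (K L : gset) : Prop :=
  exists U, is_open G U /\ forall x, K x -> (U x <-> L x).

Definition factor_abelian (K L : gset) : Prop :=
  forall a b, K a -> K b ->
    L (gmul G (ginv G a) (gmul G (ginv G b) (gmul G a b))).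

Definition chief_factor (K L : gset) : Prop :=
  normal_factor K L /\
  forall N, closed_normal N -> subset L N -> subset N K -> seteq N L \/ seteq N K.

Definition associated (K1 L1 K2 L2 : gset) : Prop :=
  seteq (closure (setmul K1 L2)) (closure (setmul K2 L1)) /\
  seteq (setI K1 (closure (setmul L1 L2))) L1 /\
  seteq (setI K2 (closure (setmul L1 L2))) L2.

Definition negligible (K L : gset) : Prop :=
  chief_factor K L /\
  (factor_abelian K L \/
   exists K' L', chief_factor K' L' /\
     (factor_compact K' L' \/ factor_discrete K' L') /\
     associated K L K' L').

Definition ess_chief_series (A : nat -> gset) (m : nat) : Prop :=
  seteq (A 0) trivial_set /\ seteq (A m) full_set /\
  (forall i, i <= m -> closed_normal (A i)) /\
  (forall i, i < m -> subset (A i) (A (S i))) /\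
  (forall i, i < m ->
     factor_compact (A (S i)) (A i) \/ factor_discrete (A (S i)) (A i) \/
     chief_factor (A (S i)) (A i)).

Definition nn_index (A : nat -> gset) (m i : nat) : Prop :=
  1 <= i /\ i <= m /\ chief_factor (A i) (A (i - 1)) /\
  ~ negligible (A i) (A (i - 1)).

End Defs.

(* Main.v *)
Require Import Defs.
From Stdlib Require Import List Arith Lia Classical FunctionalExtensionality PropExtensionality ClassicalEpsilon.

Lemma set_ext (G : TopGroup) (A B : gset G) : (forall x, A x <-> B x) -> A = B.
Proof. intros H; apply functional_extensionality; intro x; apply propositional_extensionality; auto. Qed.

Lemma g_mulrV (G : TopGroup) (x : G) : gmul G x (ginv G x) = gone G.
Proof.
  rewrite <- (gmul1 G (gmul G x (ginv G x))).
  rewrite <- (gmulV G (ginv G x)) at 1.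
  rewrite <- gmulA. rewrite (gmulA G (ginv G x) x). rewrite (gmulV G x), gmul1.
  apply gmulV.
Qed.

Lemma g_mul1r (G : TopGroup) (x : G) : gmul G x (gone G) = x.
Proof. rewrite <- (gmulV G x), gmulA, g_mulrV, gmul1. reflexivity. Qed.

Lemma g_mulKl (G : TopGroup) (x y : G) : gmul G (ginv G x) (gmul G x y) = y.
Proof. rewrite gmulA, gmulV, gmul1; reflexivity. Qed.

Lemma g_mulKr (G : TopGroup) (x y : G) : gmul G x (gmul G (ginv G x) y) = y.
Proof. rewrite gmulA, g_mulrV, gmul1; reflexivity. Qed.

Lemma g_inv_uniq (G : TopGroup) (x y : G) : gmul G x y = gone G -> y = ginv G x.
Proof. intro H. rewrite <- (g_mulKl G x y), H, g_mul1r. reflexivity. Qed.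

Lemma g_invinv (G : TopGroup) (x : G) : ginv G (ginv G x) = x.
Proof. symmetry. apply g_inv_uniq. apply gmulV. Qed.

Lemma g_invM (G : TopGroup) (x y : G) : ginv G (gmul G x y) = gmul G (ginv G y) (ginv G x).
Proof. symmetry. apply g_inv_uniq. rewrite <- gmulA, (gmulA G y), g_mulrV, gmul1, g_mulrV. reflexivity. Qed.

Lemma g_inv1 (G : TopGroup) : ginv G (gone G) = gone G.
Proof. symmetry. apply g_inv_uniq. apply gmul1. Qed.

Lemma g_mulA' (G : TopGroup) (x y z : G) : gmul G (gmul G x y) z = gmul G x (gmul G y z).
Proof. symmetry; apply gmulA. Qed.

Global Hint Rewrite g_mulA' gmul1 gmulV g_mulrV g_mul1r g_mulKl g_mulKr g_invinv g_invM g_inv1 : grp.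

Ltac gsimpl := autorewrite with grp; try reflexivity.

Definition comm (G : TopGroup) (a b : G) : G :=
  gmul G (ginv G a) (gmul G (ginv G b) (gmul G a b)).


Lemma comm_mulr (G : TopGroup) (a n l : G) :
  comm G a (gmul G n l) = gmul G (comm G a l) (gmul G (ginv G l) (gmul G (comm G a n) l)).
Proof. unfold comm. gsimpl. Qed.

Definition cont (G : TopGroup) (f : G -> G) : Prop :=
  forall U, is_open G U -> is_open G (fun x => U (f x)).

Lemma open_local (G : TopGroup) (P : gset G) :
  (forall x, P x -> exists W, is_open G W /\ W x /\ forall y, W y -> P y) -> is_open G P.
Proof.
  intro H.
  replace P with (fun x => exists U, (is_open G U /\ subset U P) /\ U x).
  - apply open_union. intros U [HU _]; exact HU.
  - apply set_ext. intro x; split.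
    + intros [U [[_ HU] Ux]]. apply HU, Ux.
    + intro Px. destruct (H x Px) as [W [HW [Wx HWP]]]. exists W; repeat split; auto.
Qed.

Lemma cont_id (G : TopGroup) : cont G (fun x => x).
Proof. intros U HU; exact HU. Qed.

Lemma cont_const (G : TopGroup) (c : G) : cont G (fun _ => c).
Proof.
  intros U HU. apply open_local. intros x Ux. exists (fun _ => True).
  split; [apply open_full | split; auto].
Qed.

Lemma cont_mul (G : TopGroup) (f g : G -> G) : cont G f -> cont G g ->
  cont G (fun x => gmul G (f x) (g x)).
Proof.
  intros Hf Hg U HU. apply open_local. intros x Ux.
  destruct (mul_cont G U (f x) (g x) HU Ux) as [V [W [HV [HW [Vx [Wx HVW]]]]]].
  exists (fun y => V (f y) /\ W (g y)). split.
  - apply (open_inter G (fun y => V (f y)) (fun y => W (g y))); auto.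
  - split; auto. intros y [H1 H2]. apply HVW; auto.
Qed.

Lemma cont_inv (G : TopGroup) (f : G -> G) : cont G f -> cont G (fun x => ginv G (f x)).
Proof. intros Hf U HU. apply (Hf (fun y => U (ginv G y))). apply inv_cont, HU. Qed.

Lemma cont_comp (G : TopGroup) (f g : G -> G) : cont G f -> cont G g -> cont G (fun x => f (g x)).
Proof. intros Hf Hg U HU. apply (Hg (fun y => U (f y))). apply Hf, HU. Qed.

Lemma closed_forall (G : TopGroup) (I : Type) (P : I -> Prop) (S : I -> gset G) :
  (forall i, P i -> closed (S i)) -> closed (fun x => forall i, P i -> S i x).
Proof.
  intro H. unfold closed.
  replace (fun x => ~ (forall i, P i -> S i x)) with
    (fun x => exists U, (exists i, P i /\ U = (fun y => ~ S i y)) /\ U x).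
  - apply open_union. intros U [i [Pi ->]]. apply H, Pi.
  - apply set_ext. intro x; split.
    + intros [U [[i [Pi ->]] Ux]] Hall. apply Ux, Hall, Pi.
    + intro Hn. apply not_all_ex_not in Hn. destruct Hn as [i Hi].
      apply imply_to_and in Hi. destruct Hi as [Pi Hi].
      exists (fun y => ~ S i y). split; eauto.
Qed.

Lemma closed_inter (G : TopGroup) (A B : gset G) : closed A -> closed B -> closed (setI A B).
Proof.
  intros HA HB.
  replace (setI A B) with (fun x => forall b : bool, True -> (if b then A else B) x).
  - apply closed_forall. intros [|] _; auto.
  - apply set_ext. intro x; unfold setI; split.
    + intro H; split; [apply (H true I) | apply (H false I)].
    + intros [H1 H2] [|] _; auto.
Qed.

Lemma closed_preimage (G : TopGroup) (f : G -> G) (D : gset G) :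
  cont G f -> closed D -> closed (fun x => D (f x)).
Proof. intros Hf HD. unfold closed in *. apply (Hf (fun y => ~ D y)), HD. Qed.

Lemma closure_closed (G : TopGroup) (A : gset G) : closed (closure A).
Proof.
  replace (closure A) with (fun x => forall C, closed C /\ subset A C -> C x).
  - apply (closed_forall G (gset G) (fun C => closed C /\ subset A C) (fun C => C)).
    intros C [H _]; exact H.
  - apply set_ext. intro x; unfold closure; split; intros H C; [intros H1 H2; apply H; auto | intros [H1 H2]; apply H; auto].
Qed.

Lemma closure_sub (G : TopGroup) (A : gset G) : subset A (closure A).
Proof. intros x Ax C _ HC. apply HC, Ax. Qed.

Lemma closure_min (G : TopGroup) (A C : gset G) : closed C -> subset A C -> subset (closure A) C.
Proof. intros HC HAC x Hx. apply Hx; auto. Qed.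

Lemma closure_cont (G : TopGroup) (f : G -> G) (S D : gset G) :
  cont G f -> closed D -> (forall x, S x -> D (f x)) -> forall x, closure S x -> D (f x).
Proof. intros Hf HD HS x Hx. apply (closure_min G S (fun y => D (f y))); auto.
  apply closed_preimage; auto. Qed.

Lemma closure_mono (G : TopGroup) (A B : gset G) : subset A B -> subset (closure A) (closure B).
Proof. intros H. apply closure_min. apply closure_closed. intros x Ax. apply closure_sub, H, Ax. Qed.

Lemma sg_one (G : TopGroup) (H : gset G) : subgroup H -> H (gone G).
Proof. intros [h _]; exact h. Qed.
Lemma sg_mul (G : TopGroup) (H : gset G) x y : subgroup H -> H x -> H y -> H (gmul G x y).
Proof. intros [_ [h _]]; apply h. Qed.
Lemma sg_inv (G : TopGroup) (H : gset G) x : subgroup H -> H x -> H (ginv G x).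
Proof. intros [_ [_ h]]; apply h. Qed.
Lemma nm_sg (G : TopGroup) (H : gset G) : normal H -> subgroup H.
Proof. intros [h _]; exact h. Qed.
Lemma nm_conj (G : TopGroup) (H : gset G) g h : normal H -> H h -> H (gmul G (ginv G g) (gmul G h g)).
Proof. intros [_ c]; apply c. Qed.
Lemma nm_conj' (G : TopGroup) (H : gset G) g h : normal H -> H h -> H (gmul G g (gmul G h (ginv G g))).
Proof. intros N Hh. pose proof (nm_conj G H (ginv G g) h N Hh). rewrite g_invinv in H0. exact H0. Qed.

Lemma closure_normal (G : TopGroup) (H : gset G) : normal H -> closed_normal (closure H).
Proof.
  intros N. pose proof (nm_sg G H N) as S.
  assert (Hc : closed (closure H)) by apply closure_closed.
  split; [|exact Hc].
  split; [split; [|split]|].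
  - apply closure_sub, sg_one, S.
  - intros x y Hx Hy.
    assert (L1 : forall a, H a -> closure H (gmul G a y)).
    { intros a Ha. apply (closure_cont G (fun z => gmul G a z) H (closure H)); auto.
      - apply cont_mul; [apply cont_const | apply cont_id].
      - intros z Hz. apply closure_sub, sg_mul; auto. }
    apply (closure_cont G (fun z => gmul G z y) H (closure H)); auto.
    apply cont_mul; [apply cont_id | apply cont_const].
  - intros x Hx. apply (closure_cont G (fun z => ginv G z) H (closure H)); auto.
    + apply cont_inv, cont_id.
    + intros z Hz. apply closure_sub, sg_inv; auto.
  - intros g h Hh. apply (closure_cont G (fun z => gmul G (ginv G g) (gmul G z g)) H (closure H)); auto.
    + apply cont_mul; [apply cont_const | apply cont_mul; [apply cont_id | apply cont_const]].
    + intros z Hz. apply closure_sub, nm_conj; auto.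
Qed.

Lemma setmul_normal (G : TopGroup) (X Y : gset G) : normal X -> normal Y -> normal (setmul X Y).
Proof.
  intros NX NY. pose proof (nm_sg G X NX) as SX. pose proof (nm_sg G Y NY) as SY.
  split; [split; [|split]|].
  - exists (gone G), (gone G). refine (conj _ (conj _ _)); [apply sg_one; auto | apply sg_one; auto | gsimpl].
  - intros a b [x [y [Hx [Hy ->]]]] [x' [y' [Hx' [Hy' ->]]]].
    exists (gmul G x x'), (gmul G (gmul G (ginv G x') (gmul G y x')) y').
    refine (conj _ (conj _ _)).
    + apply sg_mul; auto.
    + apply sg_mul; auto. apply nm_conj; auto.
    + gsimpl.
  - intros a [x [y [Hx [Hy ->]]]].
    exists (ginv G x), (gmul G x (gmul G (ginv G y) (ginv G x))). refine (conj _ (conj _ _)).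
    + apply sg_inv; auto.
    + apply nm_conj'; auto. apply sg_inv; auto.
    + gsimpl.
  - intros g a [x [y [Hx [Hy ->]]]].
    exists (gmul G (ginv G g) (gmul G x g)), (gmul G (ginv G g) (gmul G y g)). refine (conj _ (conj _ _)).
    + apply nm_conj; auto.
    + apply nm_conj; auto.
    + gsimpl.
Qed.

Lemma setmul_comm (G : TopGroup) (X Y : gset G) : normal X -> setmul X Y = setmul Y X.
Proof.
  intros NX. apply set_ext. intro a; split.
  - intros [x [y [Hx [Hy ->]]]]. exists y, (gmul G (ginv G y) (gmul G x y)). refine (conj _ (conj _ _)); auto.
    + apply nm_conj; auto.
    + gsimpl.
  - intros [y [x [Hy [Hx ->]]]]. exists (gmul G y (gmul G x (ginv G y))), y. refine (conj _ (conj _ _)); auto.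
    + apply nm_conj'; auto.
    + gsimpl.
Qed.

Lemma setmul_sub (G : TopGroup) (X Y C : gset G) : subgroup C -> subset X C -> subset Y C -> subset (setmul X Y) C.
Proof. intros SC HX HY a [x [y [Hx [Hy ->]]]]. apply sg_mul; auto. Qed.

Lemma setmul_l (G : TopGroup) (X Y : gset G) : subgroup Y -> subset X (setmul X Y).
Proof. intros SY x Hx. exists x, (gone G). refine (conj _ (conj _ _)); auto. apply sg_one; auto. gsimpl. Qed.

Lemma setmul_r (G : TopGroup) (X Y : gset G) : subgroup X -> subset Y (setmul X Y).
Proof. intros SX y Hy. exists (gone G), y. refine (conj _ (conj _ _)); auto. apply sg_one; auto. gsimpl. Qed.

Lemma cn_cl_setmul (G : TopGroup) (X Y : gset G) : closed_normal X -> closed_normal Y ->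
  closed_normal (closure (setmul X Y)).
Proof. intros [NX _] [NY _]. apply closure_normal, setmul_normal; auto. Qed.

Lemma cn_setI (G : TopGroup) (X Y : gset G) : closed_normal X -> closed_normal Y -> closed_normal (setI X Y).
Proof.
  intros [NX CX] [NY CY]. split; [|apply closed_inter; auto].
  pose proof (nm_sg G X NX). pose proof (nm_sg G Y NY).
  split; [split; [|split]|]; unfold setI.
  - split; apply sg_one; auto.
  - intros x y [] []; split; apply sg_mul; auto.
  - intros x []; split; apply sg_inv; auto.
  - intros g h []; split; apply nm_conj; auto.
Qed.

Definition gen (G : TopGroup) (S : gset G) : gset G :=
  fun x => forall N, closed_normal N /\ subset S N -> N x.
Arguments gen {G} S.

Lemma gen_cn (G : TopGroup) (S : gset G) : closed_normal (gen S).
Proof.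
  split; [|apply (closed_forall G (gset G) (fun N => closed_normal N /\ subset S N) (fun N => N));
           intros N [[_ c] _]; exact c].
  unfold gen.
  split; [split; [|split]|].
  - intros N [[[SN _] _] _]; apply sg_one; auto.
  - intros x y Hx Hy N HN. pose proof HN as [[[SN _] _] _]. apply sg_mul; [exact SN|apply Hx, HN|apply Hy, HN].
  - intros x Hx N HN. pose proof HN as [[[SN _] _] _]. apply sg_inv; [exact SN|apply Hx, HN].
  - intros g h Hh N HN. pose proof HN as [[NN _] _]. apply nm_conj; [exact NN|apply Hh, HN].
Qed.

Lemma gen_sub (G : TopGroup) (S : gset G) : subset S (gen S).
Proof. intros x Sx N [_ H]. apply H, Sx. Qed.

Lemma gen_min (G : TopGroup) (S N : gset G) : closed_normal N -> subset S N -> subset (gen S) N.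
Proof. intros H1 H2 x Hx. apply Hx; auto. Qed.

Definition Cz (G : TopGroup) (K L : gset G) : gset G :=
  fun g => forall k, K k -> L (comm G g k).
Arguments Cz {G} K L.

Lemma Cz_cn (G : TopGroup) (K L : gset G) : normal K -> closed_normal L -> closed_normal (Cz K L).
Proof.
  intros NK [NL CL]. pose proof (nm_sg G L NL) as SL.
  split.
  - split; [split; [|split]|]; unfold Cz.
    + intros k Hk. unfold comm. gsimpl. apply sg_one; auto.
    + intros x y Hx Hy k Hk.
      replace (comm G (gmul G x y) k) with
        (gmul G (gmul G (ginv G y) (gmul G (comm G x k) y)) (comm G y k)) by (unfold comm; gsimpl).
      apply sg_mul; auto. apply nm_conj; auto.
    + intros x Hx k Hk.
      replace (comm G (ginv G x) k) with
        (gmul G x (gmul G (ginv G (comm G x k)) (ginv G x))) by (unfold comm; gsimpl).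
      apply nm_conj'; auto. apply sg_inv; auto.
    + intros g c Hc k Hk.
      replace (comm G (gmul G (ginv G g) (gmul G c g)) k) with
        (gmul G (ginv G g) (gmul G (comm G c (gmul G g (gmul G k (ginv G g)))) g)) by (unfold comm; gsimpl).
      apply nm_conj; auto. apply Hc. apply nm_conj'; auto.
  - unfold Cz. apply (closed_forall G G K (fun k g => L (comm G g k))).
    intros k Hk. apply (closed_preimage G (fun g => comm G g k) L); auto.
    unfold comm. apply cont_mul; [apply cont_inv, cont_id|].
    apply cont_mul; [apply cont_const|]. apply cont_mul; [apply cont_id | apply cont_const].
Qed.

Lemma L_Cz (G : TopGroup) (K L : gset G) : normal L -> subset L (Cz K L).
Proof.
  intros NL l Hl k Hk. unfold comm. pose proof (nm_sg G L NL).
  apply sg_mul; auto. apply sg_inv; auto. apply nm_conj; auto.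
Qed.

Lemma comm_in_l (G : TopGroup) (K : gset G) a k : normal K -> K a -> K (comm G a k).
Proof. intros NK Ha. unfold comm. pose proof (nm_sg G K NK).
  apply sg_mul; auto. apply sg_inv; auto. apply nm_conj; auto. Qed.

Lemma comm_in_r (G : TopGroup) (K : gset G) a k : normal K -> K k -> K (comm G a k).
Proof. intros NK Hk. pose proof (nm_sg G K NK).
  replace (comm G a k) with (gmul G (gmul G (ginv G a) (gmul G (ginv G k) a)) k) by (unfold comm; gsimpl).
  apply sg_mul; auto. apply nm_conj; auto. apply sg_inv; auto. Qed.

Lemma cont_comm_l (G : TopGroup) (k : G) : cont G (fun g => comm G g k).
Proof. unfold comm. apply cont_mul; [apply cont_inv, cont_id|].
  apply cont_mul; [apply cont_const|]. apply cont_mul; [apply cont_id | apply cont_const]. Qed.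

Lemma cont_comm_r (G : TopGroup) (g : G) : cont G (fun k => comm G g k).
Proof. unfold comm. apply cont_mul; [apply cont_const|].
  apply cont_mul; [apply cont_inv, cont_id|]. apply cont_mul; [apply cont_const | apply cont_id]. Qed.

Lemma cn_n (G : TopGroup) (H : gset G) : closed_normal H -> normal H.
Proof. intros [h _]; exact h. Qed.
Lemma cn_sg (G : TopGroup) (H : gset G) : closed_normal H -> subgroup H.
Proof. intros [[h _] _]; exact h. Qed.
Lemma cn_cl (G : TopGroup) (H : gset G) : closed_normal H -> closed H.
Proof. intros [_ h]; exact h. Qed.

Lemma abel_sub (G : TopGroup) (K L : gset G) : factor_abelian K L <-> subset K (Cz K L).
Proof. unfold factor_abelian, Cz, comm, subset. split.
  - intros H a Ha k Hk. apply H; auto.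
  - intros H a b Ha Hb. apply (H a Ha b Hb). Qed.

Lemma KCL (G : TopGroup) (K L : gset G) : chief_factor K L -> ~ factor_abelian K L ->
  subset (setI K (Cz K L)) L.
Proof.
  intros [[CK [CL [LK _]]] P] NA.
  assert (CM : closed_normal (setI K (Cz K L))) by (apply cn_setI; auto; apply Cz_cn; auto; apply cn_n; auto).
  assert (H1 : subset L (setI K (Cz K L))).
  { intros x Hx. split; [apply LK, Hx| apply L_Cz; auto; apply cn_n; auto]. }
  assert (H2 : subset (setI K (Cz K L)) K) by (intros x Hx; apply Hx).
  destruct (P _ CM H1 H2) as [E|E].
  - intros x Hx; apply E, Hx.
  - exfalso. apply NA, abel_sub. intros a Ha. apply E, Ha.
Qed.

Lemma chief_dich (G : TopGroup) (K L N : gset G) : chief_factor K L -> closed_normal N ->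
  subset L N -> subset N K -> N = L \/ N = K.
Proof.
  intros [_ P] CN H1 H2. destruct (P N CN H1 H2) as [E|E]; [left|right]; apply set_ext; auto.
Qed.

Lemma chief_parts (G : TopGroup) (K L : gset G) : chief_factor K L ->
  closed_normal K /\ closed_normal L /\ subset L K /\ ~ subset K L.
Proof. intros [h _]; exact h. Qed.

Lemma lemmaS (G : TopGroup) (K L A B : gset G) :
  chief_factor K L -> ~ factor_abelian K L ->
  closed_normal A -> closed_normal B -> subset B A ->
  subset B (Cz K L) -> ~ subset A (Cz K L) ->
  exists X Y, chief_factor X Y /\ associated K L X Y /\ subset B Y /\ subset Y X /\ subset X A /\
    (chief_factor A B -> X = A /\ Y = B).
Proof.
  intros CF NA CA CB BA BC NAC.
  destruct (chief_parts G K L CF) as [CK [CL [LK NKL]]].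
  set (C := Cz K L) in *.
  assert (CC : closed_normal C) by (apply Cz_cn; auto; apply cn_n; auto).
  assert (LC : subset L C) by (apply L_Cz, cn_n, CL).
  assert (KC : subset (setI K C) L) by (apply KCL; auto).
  set (Y := setI A C).
  assert (CY : closed_normal Y) by (apply cn_setI; auto).
  set (S := fun x => (exists a k, A a /\ K k /\ x = comm G a k) \/ Y x).
  set (X := gen S).
  assert (CX : closed_normal X) by apply gen_cn.
  assert (SA : subset S A).
  { intros x [[a [k [Ha [Hk ->]]]]|Hy]. apply comm_in_l; auto; apply cn_n; auto. apply Hy. }
  assert (XA : subset X A) by (apply gen_min; auto).
  assert (YX : subset Y X) by (intros y Hy; apply gen_sub; right; exact Hy).
  assert (HYC : subset Y C) by (intros y Hy; apply Hy).
  destruct (not_all_ex_not _ _ NAC) as [a0 Ha0].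
  apply imply_to_and in Ha0. destruct Ha0 as [Aa0 Ca0].
  unfold C, Cz in Ca0. destruct (not_all_ex_not _ _ Ca0) as [k0 Hk0].
  apply imply_to_and in Hk0. destruct Hk0 as [Kk0 Lc0].
  set (c0 := comm G a0 k0) in *.
  assert (Xc0 : X c0) by (apply gen_sub; left; exists a0, k0; auto).
  assert (Kc0 : K c0) by (apply comm_in_r; auto; apply cn_n; auto).
  assert (NXY : ~ subset X Y).
  { intro H. apply Lc0, KC. split; [exact Kc0 | apply HYC, H, Xc0]. }
  assert (CFXY : chief_factor X Y).
  { split; [split; [|split; [|split]]; auto|].
    intros N CN YN NX.
    destruct (classic (subset N C)) as [NC|NC].
    - left. intro x; split; [intro Hx; split; [apply XA, NX, Hx | apply NC, Hx] | apply YN].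
    - right. intro x; split; [apply NX|]. revert x. apply gen_min; auto.
      destruct (not_all_ex_not _ _ NC) as [n Hn]. apply imply_to_and in Hn. destruct Hn as [Nn Cn].
      unfold C, Cz in Cn. destruct (not_all_ex_not _ _ Cn) as [k Hk].
      apply imply_to_and in Hk. destruct Hk as [Kk Lnk].
      assert (CM : closed_normal (setI K (closure (setmul N L)))).
      { apply cn_setI; auto. apply cn_cl_setmul; auto. }
      destruct (chief_dich G K L _ CF CM) as [E|E].
      + intros x Hx. split; [apply LK, Hx|]. apply closure_sub, setmul_r; auto. apply cn_sg; auto.
      + intros x Hx; apply (proj1 Hx).
      + exfalso. apply Lnk. rewrite <- E. split.
        * apply comm_in_r; auto. apply cn_n; auto.
        * apply closure_sub, setmul_l; [apply cn_sg; auto|]. apply comm_in_l; auto. apply cn_n; auto.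
      + intros x [[a [k' [Ha [Hk' ->]]]]|Hy]; [|apply YN, Hy].
        assert (Kcl : closure (setmul N L) k') by (assert (h : setI K (closure (setmul N L)) k') by (rewrite E; exact Hk'); apply h).
        apply (closure_cont G (fun z => comm G a z) (setmul N L) N); auto.
        * apply cont_comm_r.
        * apply cn_cl; auto.
        * intros z [n' [l [Hn' [Hl ->]]]]. rewrite comm_mulr.
          apply sg_mul; [apply cn_sg; auto| |].
          -- apply YN. split. apply comm_in_l; auto; apply cn_n; auto.
             apply LC. apply comm_in_r; auto; apply cn_n; auto.
          -- apply nm_conj; [apply cn_n; auto|]. apply comm_in_r; auto; apply cn_n; auto. }
  assert (KXL : subset K (closure (setmul X L))).
  { assert (CM : closed_normal (setI K (closure (setmul X L)))).
    { apply cn_setI; auto. apply cn_cl_setmul; auto. }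
    destruct (chief_dich G K L _ CF CM) as [E|E].
    - intros x Hx. split; [apply LK, Hx|]. apply closure_sub, setmul_r; auto. apply cn_sg; auto.
    - intros x Hx; apply (proj1 Hx).
    - exfalso. apply Lc0. rewrite <- E. split; [exact Kc0|].
      apply closure_sub, setmul_l; [apply cn_sg; auto| exact Xc0].
    - intros x Hx. assert (h : setI K (closure (setmul X L)) x) by (rewrite E; exact Hx). apply (proj2 h). }
  assert (CKY : closed_normal (closure (setmul K Y))) by (apply cn_cl_setmul; auto).
  assert (CXL : closed_normal (closure (setmul X L))) by (apply cn_cl_setmul; auto).
  assert (CLY : closed_normal (closure (setmul L Y))) by (apply cn_cl_setmul; auto).
  assert (LYC : subset (closure (setmul L Y)) C).
  { apply closure_min; [apply cn_cl; auto|]. apply setmul_sub; auto. apply cn_sg; auto. }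
  exists X, Y. split; [exact CFXY|]. split; [|split; [|split; [|split]]].
  - refine (conj _ (conj _ _)); intro x; split.
    + revert x. apply closure_min; [apply cn_cl; auto|]. apply setmul_sub; [apply cn_sg; auto|exact KXL|].
        intros y Hy. apply closure_sub, setmul_l; [apply cn_sg; auto| apply YX, Hy].
    + revert x. apply closure_min; [apply cn_cl; auto|]. apply setmul_sub; [apply cn_sg; auto| |].
      * apply gen_min; auto. intros y [[a [k [Ha [Hk ->]]]]|Hy].
           ++ apply closure_sub, setmul_l; [apply cn_sg; auto|]. apply comm_in_r; auto; apply cn_n; auto.
           ++ apply closure_sub, setmul_r; [apply cn_sg; auto| exact Hy].
      * intros y Hy. apply closure_sub, setmul_l; [apply cn_sg; auto| apply LK, Hy].
    + intros [H1 H2]. apply KC. split; [exact H1| apply LYC, H2].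
    + intro Hx. split; [apply LK, Hx|]. apply closure_sub, setmul_l; [apply cn_sg; auto| exact Hx].
    + intros [H1 H2]. split; [apply XA, H1| apply LYC, H2].
    + intro Hx. split; [apply YX, Hx|]. apply closure_sub, setmul_r; [apply cn_sg; auto| exact Hx].
  - intros x Hx. split; [apply BA, Hx| apply BC, Hx].
  - exact YX.
  - exact XA.
  - intro CAB.
    assert (EY : Y = B).
    { destruct (chief_dich G A B Y CAB CY) as [E|E]; auto.
      - intros x Hx; split; [apply BA, Hx| apply BC, Hx].
      - intros x Hx; apply (proj1 Hx).
      - exfalso. apply NAC. rewrite <- E. exact HYC. }
    split; [|exact EY].
    destruct (chief_dich G A B X CAB CX) as [E|E]; auto.
    + intros x Hx. apply YX. rewrite EY. exact Hx.
    + exfalso. apply NXY. rewrite E, EY. intros x Hx; exact Hx.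
Qed.

Lemma filter_list (G : TopGroup) (F : gset G -> Prop) (l' : list (gset G)) :
  exists l, (forall U, In U l -> F U) /\ (forall U, In U l' -> F U -> In U l).
Proof.
  induction l' as [|V l' [l [H1 H2]]].
  - exists nil. split; [intros U []| intros U []].
  - destruct (classic (F V)) as [FV|FV].
    + exists (V :: l). split.
      * intros U [<-|HU]; auto.
      * intros U [<-|HU] FU; [left; auto| right; auto].
    + exists l. split; auto. intros U [<-|HU] FU; [contradiction| auto].
Qed.

Lemma comp_inherit (G : TopGroup) (A B X Y : gset G) :
  closed_normal A -> closed_normal B -> closed_normal X -> closed_normal Y ->
  subset B Y -> subset Y X -> subset X A -> factor_compact A B -> factor_compact X Y.
Proof.
  intros CA CB CX CY BY YX XA HC F HF Hcov.
  destruct (HC (fun U => F U \/ U = (fun x => ~ X x))) as [l' [Hl'1 Hl'2]].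
  - intros U [FU| ->]; [apply HF; auto| apply (cn_cl G X CX)].
  - intros x Ax. destruct (classic (X x)) as [Xx|Xx].
    + destruct (Hcov x Xx) as [U [FU Ux]]. exists U; auto.
    + exists (fun x => ~ X x); auto.
  - destruct (filter_list G F l') as [l [Hl1 Hl2]].
    exists l. split; auto.
    intros x Xx. destruct (Hl'2 x (XA x Xx)) as [U [InU [u [b [Uu [Bb ->]]]]]].
    destruct (Hl'1 U InU) as [FU| EU].
    + exists U. split; auto. exists u, b. split; auto.
    + exfalso. subst U. apply Uu.
      replace u with (gmul G (gmul G u b) (ginv G b)) by gsimpl.
      apply sg_mul; [apply cn_sg; auto| exact Xx|]. apply sg_inv; [apply cn_sg; auto|]. apply YX, BY, Bb.
Qed.

Lemma disc_inherit (G : TopGroup) (A B X Y : gset G) :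
  closed_normal A -> closed_normal B -> closed_normal X -> closed_normal Y ->
  subset B Y -> subset Y X -> subset X A -> factor_discrete A B -> factor_discrete X Y.
Proof.
  intros CA CB CX CY BY YX XA [U [HU HUB]].
  exists (fun x => exists U', (exists y, Y y /\ U' = (fun z => U (gmul G (ginv G y) z))) /\ U' x).
  split.
  - apply open_union. intros U' [y [Yy ->]].
    apply (cont_mul G (fun _ => ginv G y) (fun z => z)); [apply cont_const| apply cont_id| exact HU].
  - intros x Xx. split.
    + intros [U' [[y [Yy ->]] Hu]].
      assert (Ayx : A (gmul G (ginv G y) x)).
      { apply sg_mul; [apply cn_sg; auto| |apply XA, Xx]. apply sg_inv; [apply cn_sg; auto|]. apply XA, YX, Yy. }
      apply HUB in Hu; [|exact Ayx].
      replace x with (gmul G y (gmul G (ginv G y) x)) by gsimpl.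
      apply sg_mul; [apply cn_sg; auto| exact Yy| apply BY, Hu].
    + intro Yx. exists (fun z => U (gmul G (ginv G x) z)). split; [exists x; auto|].
      simpl. rewrite gmulV. apply HUB; apply sg_one; apply cn_sg; auto.
Qed.

Lemma assoc_sym (G : TopGroup) (K1 L1 K2 L2 : gset G) :
  closed_normal L1 -> closed_normal L2 ->
  associated K1 L1 K2 L2 -> associated K2 L2 K1 L1.
Proof.
  intros C1 C2 [H1 [H2 H3]]. unfold associated.
  rewrite (setmul_comm G L2 L1) by (apply cn_n; auto).
  split; [|split]; auto.
  intro x; split; intro h; [apply (proj2 (H1 x)) | apply (proj1 (H1 x))]; exact h.
Qed.

Lemma Cz_sub (G : TopGroup) (K1 L1 K2 L2 : gset G) :
  closed_normal K1 -> closed_normal L1 -> closed_normal K2 -> closed_normal L2 ->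
  associated K1 L1 K2 L2 -> subset (Cz K1 L1) (Cz K2 L2).
Proof.
  intros CK1 CL1 CK2 CL2 [Ha [Hb Hc]] g Hg k Hk.
  apply (proj1 (Hc _)). split; [apply comm_in_r; auto; apply cn_n; auto|].
  assert (Kcl : closure (setmul K1 L2) k).
  { apply (proj2 (Ha _)). apply closure_sub, setmul_l; [apply cn_sg; auto| exact Hk]. }
  apply (closure_cont G (fun z => comm G g z) (setmul K1 L2)); auto.
  - apply cont_comm_r.
  - apply closure_closed.
  - intros z [k1 [l2 [Hk1 [Hl2 ->]]]]. apply closure_sub. rewrite comm_mulr.
    rewrite (setmul_comm G L1 L2) by (apply cn_n; auto).
    exists (comm G g l2), (gmul G (ginv G l2) (gmul G (comm G g k1) l2)). split; [|split; [|reflexivity]].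
    + apply comm_in_r; auto; apply cn_n; auto.
    + apply nm_conj; [apply cn_n; auto| apply Hg, Hk1].
Qed.

Lemma Cz_eq (G : TopGroup) (K1 L1 K2 L2 : gset G) :
  closed_normal K1 -> closed_normal L1 -> closed_normal K2 -> closed_normal L2 ->
  associated K1 L1 K2 L2 -> Cz K1 L1 = Cz K2 L2.
Proof.
  intros CK1 CL1 CK2 CL2 H. apply set_ext. intro x; split.
  - apply Cz_sub; auto.
  - apply Cz_sub; auto. apply assoc_sym; auto.
Qed.

Lemma U_lemma (G : TopGroup) (K1 L1 K2 L2 : gset G) :
  closed_normal K1 -> closed_normal L1 -> closed_normal K2 -> closed_normal L2 ->
  associated K1 L1 K2 L2 -> ~ factor_abelian K1 L1 ->
  subset L2 (Cz K1 L1) /\ ~ subset K2 (Cz K1 L1).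
Proof.
  intros CK1 CL1 CK2 CL2 HA NA. split.
  - rewrite (Cz_eq G K1 L1 K2 L2); auto. apply L_Cz, cn_n; auto.
  - intro HK. apply NA, abel_sub. destruct HA as [Ha _].
    assert (CC : closed_normal (Cz K1 L1)) by (apply Cz_cn; apply cn_n in CK1; auto).
    intros k Hk.
    apply (closure_min G (setmul K2 L1)); [apply cn_cl; auto| |].
    + apply setmul_sub; [apply cn_sg; auto| exact HK| apply L_Cz, cn_n; auto].
    + apply (proj1 (Ha _)). apply closure_sub, setmul_l; [apply cn_sg; auto| exact Hk].
Qed.

Lemma nonab_transfer (G : TopGroup) (K1 L1 K2 L2 : gset G) :
  closed_normal K1 -> closed_normal L1 -> closed_normal K2 -> closed_normal L2 ->
  associated K1 L1 K2 L2 -> ~ factor_abelian K1 L1 -> ~ factor_abelian K2 L2.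
Proof.
  intros CK1 CL1 CK2 CL2 HA NA Hab. apply abel_sub in Hab.
  destruct (U_lemma G K1 L1 K2 L2) as [_ H]; auto.
  apply H. rewrite (Cz_eq G K1 L1 K2 L2); auto.
Qed.

Definition idx (G : TopGroup) (A : nat -> gset G) (m : nat) (C : gset G) (j : nat) : Prop :=
  1 <= j /\ j <= m /\ subset (A (j - 1)) C /\ ~ subset (A j) C.

Lemma series_mono (G : TopGroup) (A : nat -> gset G) (m : nat) :
  ess_chief_series A m -> forall a b, a <= b -> b <= m -> subset (A a) (A b).
Proof.
  intros [_ [_ [_ [Hs _]]]] a b Hab. induction Hab as [|b Hab IH]; intros Hb.
  - intros x h; exact h.
  - intros x h. apply Hs; [lia|]. apply IH; [lia| exact h].
Qed.

Lemma idx_exists (G : TopGroup) (A : nat -> gset G) (m : nat) (C : gset G) :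
  subset (A 0) C -> ~ subset (A m) C -> exists j, idx G A m C j.
Proof.
  intros H0 Hm.
  assert (forall k, k <= m -> ~ subset (A k) C -> exists j, 1 <= j /\ j <= k /\ subset (A (j - 1)) C /\ ~ subset (A j) C).
  { induction k as [|k IH]; intros Hk Hn.
    - contradiction.
    - destruct (classic (subset (A k) C)) as [Hs|Hs].
      + exists (S k). split; [lia|split; [lia|]]. replace (S k - 1) with k by lia. auto.
      + destruct (IH ltac:(lia) Hs) as [j [Hj1 [Hj2 Hj3]]]. exists j. split; [lia| split; [lia| exact Hj3]]. }
  destruct (H m (le_n m) Hm) as [j Hj]. exists j. exact Hj.
Qed.

Lemma idx_unique (G : TopGroup) (A : nat -> gset G) (m : nat) (C : gset G) j j' :
  ess_chief_series A m -> idx G A m C j -> idx G A m C j' -> j = j'.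
Proof.
  intros HS [h1 [h2 [h3 h4]]] [h1' [h2' [h3' h4']]].
  destruct (Nat.lt_trichotomy j j') as [Hl|[He|Hl]]; auto; exfalso.
  - apply h4. intros x Hx. apply h3'. apply (series_mono G A m HS j (j' - 1)); auto; lia.
  - apply h4'. intros x Hx. apply h3. apply (series_mono G A m HS j' (j - 1)); auto; lia.
Qed.

Lemma series_cn (G : TopGroup) (A : nat -> gset G) (m : nat) i :
  ess_chief_series A m -> i <= m -> closed_normal (A i).
Proof. intros [_ [_ [H _]]] Hi. apply H, Hi. Qed.

Lemma nn_facts (G : TopGroup) (A : nat -> gset G) (m i : nat) :
  nn_index A m i -> chief_factor (A i) (A (i - 1)) /\ ~ factor_abelian (A i) (A (i - 1)).
Proof.
  intros [_ [_ [CF NN]]]. split; auto. intro Hab. apply NN. split; auto.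
Qed.

Lemma idx_exists_nn (G : TopGroup) (A B : nat -> gset G) (m n i : nat) :
  ess_chief_series A m -> ess_chief_series B n -> nn_index A m i ->
  exists j, idx G B n (Cz (A i) (A (i - 1))) j.
Proof.
  intros HA [B0 [Bn _]] Hi. destruct (nn_facts G A m i Hi) as [CF NA].
  destruct (chief_parts G _ _ CF) as [CK [CL _]].
  assert (CC : closed_normal (Cz (A i) (A (i - 1)))) by (apply Cz_cn; [apply cn_n; auto | auto]).
  apply idx_exists.
  - intros x Hx. apply B0 in Hx. unfold trivial_set in Hx. subst x. apply sg_one, cn_sg, CC.
  - intro H. apply NA, abel_sub. intros x _. apply H, Bn. exact I.
Qed.

Lemma step2 (G : TopGroup) (A B : nat -> gset G) (m n i j : nat) :
  ess_chief_series A m -> ess_chief_series B n -> nn_index A m i ->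
  idx G B n (Cz (A i) (A (i - 1))) j ->
  nn_index B n j /\ associated (A i) (A (i - 1)) (B j) (B (j - 1)).
Proof.
  intros HA HB Hi [j1 [jn [Hsub Hns]]].
  destruct (nn_facts G A m i Hi) as [CF NA].
  destruct (chief_parts G _ _ CF) as [CK [CL [LK _]]].
  assert (CBj : closed_normal (B j)) by (apply (series_cn G B n); auto).
  assert (CBj1 : closed_normal (B (j - 1))) by (apply (series_cn G B n); auto; lia).
  assert (BB : subset (B (j - 1)) (B j)) by (apply (series_mono G B n HB); lia).
  assert (Htri : factor_compact (B j) (B (j - 1)) \/ factor_discrete (B j) (B (j - 1)) \/
                 chief_factor (B j) (B (j - 1))).
  { destruct HB as [_ [_ [_ [_ H]]]]. specialize (H (j - 1) ltac:(lia)). assert (E : S (j - 1) = j) by lia. rewrite E in H. exact H. }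
  destruct (lemmaS G (A i) (A (i - 1)) (B j) (B (j - 1)) CF NA CBj CBj1 BB Hsub Hns)
    as [X [Y [CFXY [HXY [BY [YX [XA Hid]]]]]]].
  destruct (chief_parts G _ _ CFXY) as [CX [CY _]].
  destruct Htri as [Hc|[Hd|Hch]].
  - exfalso. apply Hi. split; auto. right. exists X, Y. split; auto. split; auto.
    left. apply (comp_inherit G (B j) (B (j - 1))); auto.
  - exfalso. apply Hi. split; auto. right. exists X, Y. split; auto. split; auto.
    right. apply (disc_inherit G (B j) (B (j - 1))); auto.
  - destruct (Hid Hch) as [-> ->].
    split; auto.
    split; [exact j1| split; [exact jn| split; [exact Hch|]]].
    intros [_ [Hab | [K' [L' [CF' [Hcd HA']]]]]].
    + apply (nonab_transfer G (A i) (A (i - 1)) (B j) (B (j - 1))); auto.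
    + destruct (chief_parts G _ _ CF') as [CK' [CL' [LK' _]]].
      assert (NAB : ~ factor_abelian (B j) (B (j - 1))) by
        (apply (nonab_transfer G (A i) (A (i - 1))); auto).
      destruct (U_lemma G (B j) (B (j - 1)) K' L') as [U1 U2]; auto.
      rewrite <- (Cz_eq G (A i) (A (i - 1)) (B j) (B (j - 1))) in U1, U2; auto.
      destruct (lemmaS G (A i) (A (i - 1)) K' L' CF NA CK' CL' LK' U1 U2)
        as [X' [Y' [_ [HXY' [_ [_ [_ Hid']]]]]]].
      destruct (Hid' CF') as [-> ->].
      apply Hi. split; auto. right. exists K', L'. auto.
Qed.

Lemma fwd_idx (G : TopGroup) (A B : nat -> gset G) (m n i j : nat) :
  ess_chief_series A m -> ess_chief_series B n -> nn_index A m i -> nn_index B n j ->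
  associated (A i) (A (i - 1)) (B j) (B (j - 1)) -> idx G B n (Cz (A i) (A (i - 1))) j.
Proof.
  intros HA HB Hi Hj Has.
  destruct (nn_facts G A m i Hi) as [CF NA]. destruct (chief_parts G _ _ CF) as [CK [CL _]].
  destruct (nn_facts G B n j Hj) as [CF' NA']. destruct (chief_parts G _ _ CF') as [CK' [CL' _]].
  destruct (U_lemma G _ _ _ _ CK CL CK' CL' Has NA) as [U1 U2].
  destruct Hj as [j1 [jn _]]. split; [exact j1| split; [exact jn| split; auto]].
Qed.

Lemma own_idx (G : TopGroup) (A : nat -> gset G) (m i : nat) :
  nn_index A m i -> idx G A m (Cz (A i) (A (i - 1))) i.
Proof.
  intros Hi. destruct (nn_facts G A m i Hi) as [CF NA]. destruct (chief_parts G _ _ CF) as [CK [CL _]].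
  destruct Hi as [i1 [im _]]. split; [exact i1| split; [exact im| split]].
  - apply L_Cz, cn_n; auto.
  - intro H. apply NA, abel_sub, H.
Qed.

Theorem mainTheorem13 (G : TopGroup) (A B : nat -> gset G) (m n : nat) :
  lcsc G -> ess_chief_series A m -> ess_chief_series B n ->
  exists f : nat -> nat,
    (forall i, nn_index A m i -> nn_index B n (f i)) /\
    (forall i i', nn_index A m i -> nn_index A m i' -> f i = f i' -> i = i') /\
    (forall j, nn_index B n j -> exists i, nn_index A m i /\ f i = j) /\
    (forall i j, nn_index A m i -> nn_index B n j ->
       (associated (A i) (A (i - 1)) (B j) (B (j - 1)) <-> j = f i)).
Proof.
  intros _ HA HB.
  assert (Hf : forall i, exists j, nn_index A m i -> idx G B n (Cz (A i) (A (i - 1))) j).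
  { intro i. destruct (classic (nn_index A m i)) as [h|h].
    - destruct (idx_exists_nn G A B m n i HA HB h) as [j Hj]. exists j; auto.
    - exists 0. intro; contradiction. }
  set (f := fun i => proj1_sig (constructive_indefinite_description _ (Hf i))).
  assert (Hfi : forall i, nn_index A m i -> idx G B n (Cz (A i) (A (i - 1))) (f i)).
  { intro i. exact (proj2_sig (constructive_indefinite_description _ (Hf i))). }
  exists f. split; [|split; [|split]].
  - intros i Hi. apply (proj1 (step2 G A B m n i (f i) HA HB Hi (Hfi i Hi))).
  - intros i i' Hi Hi' E.
    destruct (step2 G A B m n i (f i) HA HB Hi (Hfi i Hi)) as [Hj As1].
    destruct (step2 G A B m n i' (f i') HA HB Hi' (Hfi i' Hi')) as [_ As2].
    rewrite <- E in As2.
    destruct (nn_facts G A m i Hi) as [CF NA]. destruct (chief_parts G _ _ CF) as [CK [CL _]].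
    destruct (nn_facts G A m i' Hi') as [CF' NA']. destruct (chief_parts G _ _ CF') as [CK' [CL' _]].
    destruct (nn_facts G B n (f i) Hj) as [CFj _]. destruct (chief_parts G _ _ CFj) as [CKj [CLj _]].
    assert (E1 : Cz (A i) (A (i - 1)) = Cz (A i') (A (i' - 1))).
    { rewrite (Cz_eq G _ _ _ _ CK CL CKj CLj As1). symmetry. apply (Cz_eq G); auto. }
    apply (idx_unique G A m (Cz (A i) (A (i - 1))) i i' HA).
    + apply own_idx; auto.
    + rewrite E1. apply own_idx; auto.
  - intros j Hj.
    destruct (idx_exists_nn G B A n m j HB HA Hj) as [i Hi].
    destruct (step2 G B A n m j i HB HA Hj Hi) as [Hni Has].
    exists i. split; auto.
    destruct (nn_facts G A m i Hni) as [CF _]. destruct (chief_parts G _ _ CF) as [CK [CL _]].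
    apply (idx_unique G B n (Cz (A i) (A (i - 1))) (f i) j HB); [apply Hfi; auto|].
    destruct (nn_facts G B n j Hj) as [CFj _]. destruct (chief_parts G _ _ CFj) as [CKj [CLj _]].
    apply fwd_idx with (m := m); auto. apply assoc_sym; auto.
  - intros i j Hi Hj. split.
    + intro Has. apply (idx_unique G B n (Cz (A i) (A (i - 1))) j (f i) HB); [|apply Hfi; auto].
      apply fwd_idx with (m := m); auto.
    + intros ->. apply (proj2 (step2 G A B m n i (f i) HA HB Hi (Hfi i Hi))).
Qed.
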